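(* Let $G$ be a multiplicative monoid with identity, let $N$ be a $G$-graded near-ring, let $A$ be a totally ordered set and let $(P_a)_{a\in A}$ be a family of graded weakly prime ideals of $N$ such that $P_a\subseteq P_b$ whenever $a\le b$. Then $P=\bigcap_{a\in A}P_a$ is a graded weakly prime ideal of $N$.
   Context: A near-ring $(N,+,\cdot)$ is a set with two binary operations such that $(N,+)$ is a group (not necessarily abelian), $(N,\cdot)$ is a semigroup, and $(a+b)y = ay+by$ for all $a,b,y\in N$. For a multiplicative monoid $G$ with identity, $N$ is a $G$-graded near-ring if there is a family $\{N_\sigma\}_{\sigma\in G}$ of additive normal subgroups of $N$ with $N=\bigoplus_{\sigma\in G}N_\sigma$ and $N_\sigma N_\tau\subseteq N_{\sigma\tau}$. An ideal $P$ is graded if $P=\bigoplus_{\sigma}(P\cap N_\sigma)$. For ideals $I,J$, $IJ$ denotes their product. A graded ideal $P$ is graded weakly prime if for all graded ideals $I,J$ with $\{0\}\neq IJ\subseteq P$, either $I\subseteq P$ or $J\subseteq P$. *)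

(* Defs.v *)
From mathcomp Require Import all_boot all_order.
From Stdlib Require List.

Set Implicit Arguments.
Unset Strict Implicit.
Unset Printing Implicit Defensive.

Record monoid := Monoid {
  mcarrier :> Type;
  mop : mcarrier -> mcarrier -> mcarrier;
  mone : mcarrier;
  mopA : forall x y z, mop x (mop y z) = mop (mop x y) z;
  mop1x : forall x, mop mone x = x;
  mopx1 : forall x, mop x mone = x
}.

Record nearRing := NearRing {
  ncarrier :> Type;
  nadd : ncarrier -> ncarrier -> ncarrier;
  nopp : ncarrier -> ncarrier;
  nzero : ncarrier;
  nmul : ncarrier -> ncarrier -> ncarrier;
  naddA : forall x y z, nadd x (nadd y z) = nadd (nadd x y) z;
  nadd0x : forall x, nadd nzero x = x;
  naddx0 : forall x, nadd x nzero = x;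
  naddNx : forall x, nadd (nopp x) x = nzero;
  naddxN : forall x, nadd x (nopp x) = nzero;
  nmulA : forall x y z, nmul x (nmul y z) = nmul (nmul x y) z;
  nmulDl : forall a b y, nmul (nadd a b) y = nadd (nmul a y) (nmul b y)
}.

Section NearRingDefs.
Variable N : nearRing.

Local Notation "x + y" := (nadd x y).
Local Notation "- x" := (nopp x).
Local Notation "x * y" := (nmul x y).
Local Notation "0" := (nzero N).

Definition subsetN (I J : N -> Prop) : Prop := forall x, I x -> J x.

Definition normal_subgroup (S : N -> Prop) : Prop :=
  [/\ S 0,
      (forall x y, S x -> S y -> S (x + y)),
      (forall x, S x -> S (- x)) &
      (forall n x, S x -> S ((n + x) + - n))].

(* ideal of a near-ring (Pilz): normal subgroup with I N ⊆ I and
   n(n'+i) - n n' ∈ I *)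
Definition ideal (I : N -> Prop) : Prop :=
  [/\ normal_subgroup I,
      (forall i n, I i -> I (i * n)) &
      (forall n n' i, I i -> I ((n * (n' + i)) + - (n * n')))].

Definition prodI (I J : N -> Prop) : N -> Prop :=
  fun x => exists i j, [/\ I i, J j & x = i * j].

Definition lsum {G : Type} (s : seq (G * N)) : N :=
  foldr (fun p acc => p.2 + acc) 0 s.

End NearRingDefs.

(* ---------- G-graded near-rings: N = ⊕_{σ∈G} N_σ (internal direct sum
   of additive normal subgroups) with N_σ N_τ ⊆ N_{στ} ---------- *)
Definition graded_near_ring (G : monoid) (N : nearRing) (Ng : G -> N -> Prop)
  : Prop :=
  [/\ (forall g, normal_subgroup (Ng g)),
      (forall x : N, exists s : seq (G * N),
          [/\ List.NoDup (map fst s),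
              (forall p, List.In p s -> Ng p.1 p.2) &
              x = lsum s]),
      (* independence (directness) of the sum *)
      (forall s : seq (G * N),
          List.NoDup (map fst s) ->
          (forall p, List.In p s -> Ng p.1 p.2) ->
          lsum s = nzero N ->
          forall p, List.In p s -> p.2 = nzero N) &
      (forall (g h : G) (x y : N), Ng g x -> Ng h y ->
          Ng (mop g h) (nmul x y))].

(* graded ideal: P = ⊕_σ (P ∩ N_σ) *)
Definition graded_ideal (G : monoid) (N : nearRing) (Ng : G -> N -> Prop)
  (P : N -> Prop) : Prop :=
  ideal P /\
  forall x : N, P x -> exists s : seq (G * N),
      [/\ List.NoDup (map fst s),
          (forall p, List.In p s -> Ng p.1 p.2 /\ P p.2) &
          x = lsum s].

Definition graded_weakly_prime (G : monoid) (N : nearRing) (Ng : G -> N -> Prop)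
  (P : N -> Prop) : Prop :=
  graded_ideal Ng P /\
  forall I J : N -> Prop,
    graded_ideal Ng I -> graded_ideal Ng J ->
    ~ (forall x, prodI I J x <-> x = nzero N) ->
    subsetN (prodI I J) P ->
    subsetN I P \/ subsetN J P.

(* Main.v *)
Require Import Defs.
From mathcomp Require Import all_boot all_order.
From Stdlib Require Import Classical ClassicalEpsilon.
From Stdlib Require List.
Set Implicit Arguments.
Unset Strict Implicit.

Section Aux.
Variable G : monoid.
Variable N : nearRing.
Variable Ng : G -> N -> Prop.
Hypothesis HG : graded_near_ring Ng.

Local Notation "x + y" := (nadd x y).
Local Notation "- x" := (nopp x).
Local Notation "0" := (nzero N).

Lemma g_eq (a b : N) : a + - b = 0 -> a = b.
Proof.
move=> H. rewrite -(naddx0 a) -(naddNx b) naddA H nadd0x. by [].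
Qed.

Lemma g_addKl (a b : N) : - a + (a + b) = b.
Proof. by rewrite naddA naddNx nadd0x. Qed.

Lemma g_opp0 : - (0 : N) = 0.
Proof. by rewrite -{2}(naddxN 0) nadd0x. Qed.


Lemma g_oppD (a b : N) : - (a + b) = - b + - a.
Proof.
have H : (a + b) + (- b + - a) = 0.
  by rewrite -naddA (naddA b) naddxN nadd0x naddxN.
have H2 : - (a + b) + ((a + b) + (- b + - a)) = - b + - a by rewrite g_addKl.
by rewrite H naddx0 in H2.
Qed.

Definition comp (s : seq (G * N)) (g : G) : N :=
  foldr (fun p acc => if excluded_middle_informative (p.1 = g) then p.2 else acc) 0 s.

Lemma comp_notin s g : ~ List.In g (map fst s) -> comp s g = 0.
Proof.
elim: s => [|[k x] s IH] //= H.
case: excluded_middle_informative => /= [E|_]; first by exfalso; apply: H; left.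
apply: IH => H'; apply: H; by right.
Qed.

Lemma comp_in s p : List.NoDup (map fst s) -> List.In p s -> comp s p.1 = p.2.
Proof.
elim: s => [|[k x] s IH] //= ND [E|Hp].
  subst p => /=. by case: excluded_middle_informative.
inversion ND; subst.
case: excluded_middle_informative => /= [E|_]; last by apply: IH.
exfalso; apply: H1; rewrite E. by apply: List.in_map.
Qed.

Lemma comp_cases s g : comp s g = 0 \/ exists p, List.In p s /\ comp s g = p.2.
Proof.
elim: s => [|[k x] s IH] /=; first by left.
case: excluded_middle_informative => /= _.
  right; exists (k, x); split => //; by left.
case: IH => [->|[p [Hp ->]]]; first by left.
right; exists p; split => //; by right.
Qed.

Lemma g_inter g h (c : N) : g <> h -> Ng g c -> Ng h c -> c = 0.
Proof.
case: HG => Hn _ Hind _ gh Hg Hh.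
have L := Hind [:: (g, c); (h, - c)].
have := L _ _ _ (g, c). apply => /=.
- constructor. move=> [E|[]]; by apply: gh. constructor => //. constructor.
- move=> p [<-|[<-|[]]] //=. by case: (Hn h) => _ _ ? _; auto.
- by rewrite /lsum /= naddx0 naddxN.
- by left.
Qed.

Lemma g_comm g h (x y : N) : g <> h -> Ng g x -> Ng h y -> x + y = y + x.
Proof.
move=> gh Hx Hy.
case: HG => Hn _ _ _.
set c := ((x + y) + - x) + - y.
have ch : Ng h c.
  case: (Hn h) => _ Hadd Hopp Hnorm. apply: Hadd; [by apply: Hnorm|by apply: Hopp].
have cg : Ng g c.
  case: (Hn g) => _ Hadd Hopp Hnorm. rewrite /c -!naddA.
  apply: Hadd => //. rewrite naddA. apply: Hnorm. by apply: Hopp.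
have c0 := g_inter gh cg ch.
have E1 : (x + y) + - x = y by apply: g_eq.
by rewrite -{2}E1 -naddA naddNx naddx0.
Qed.

Definition homog (s : seq (G * N)) :=
  List.NoDup (map fst s) /\ forall p, List.In p s -> Ng p.1 p.2.

Lemma add_hom s h y : homog s -> Ng h y ->
  exists s', [/\ homog s', lsum s' = y + lsum s,
    (forall g, comp s' g = if excluded_middle_informative (g = h) then y + comp s g else comp s g)
    & forall k, List.In k (map fst s') -> k = h \/ List.In k (map fst s)].
Proof.
move=> [ND Hs] Hy.
elim: s ND Hs => [|[k x] s IH] ND Hs.
  exists [:: (h, y)]; split.
  - rewrite /homog /=; split; last by move=> p [<-|[]]. by constructor; [by []|constructor].
  - by [].
  - move=> g /=. do 2 case: excluded_middle_informative => //=; try congruence.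
    by rewrite naddx0.
  - move=> k /= [<-|[]]; by left.
inversion ND; subst.
have Hx : Ng k x by apply: (Hs (k, x)); left.
have Hs' : forall p, List.In p s -> Ng p.1 p.2 by move=> p Hp; apply: Hs; right.
case: (classic (k = h)) => [E|kh].
  subst k. exists ((h, y + x) :: s); split.
  - split => //. move=> p /= [<-|Hp] /=; last by apply: Hs'.
    case: HG => Hn _ _ _. by case: (Hn h) => _ Ha _ _; apply: Ha.
  - by rewrite /lsum /= naddA.
  - move=> g /=. do 2 case: excluded_middle_informative => //=; congruence.
  - move=> k /= [<-|Hk]; [by left|right; by right].
case: (IH H2 Hs') => s0 [[ND0 H0] L0 C0 K0].
exists ((k, x) :: s0); split.
- rewrite /homog /=; split; last by move=> p [<-|Hp] //; apply: H0.
  constructor => //. move/K0 => [E|E]; [by apply: kh|by apply: H1].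
- rewrite /lsum /= -/(lsum s0) -/(lsum s) L0 !naddA (g_comm kh Hx Hy). by [].
- move=> g /=. rewrite C0.
  do 2 case: excluded_middle_informative => //=; try congruence.
- move=> k' /= [<-|Hk]; first by right; left.
  case: (K0 _ Hk) => ?; [by left|right; by right].
Qed.

Lemma sub_all t s : homog t -> homog s ->
  exists u, [/\ homog u, lsum u = - lsum t + lsum s &
     forall g, comp u g = - comp t g + comp s g].
Proof.
elim: t s => [|[h y] t IH] s Ht Hs.
  exists s; split => //=; first by rewrite /lsum /= g_opp0 nadd0x.
  by move=> g; rewrite g_opp0 nadd0x.
case: Ht => ND Ht. inversion ND; subst.
have Hy : Ng h y by apply: (Ht (h, y)); left.
have Hy' : Ng h (- y) by case: HG => Hn _ _ _; case: (Hn h) => _ _ Ho _; apply: Ho.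
case: (add_hom Hs Hy') => s1 [Hs1 L1 C1 _].
have Ht' : homog t by split => // p Hp; apply: Ht; right.
case: (IH s1 Ht' Hs1) => u [Hu Lu Cu].
exists u; split => //.
  by rewrite Lu L1 /lsum /= -/(lsum t) g_oppD !naddA.
move=> g. rewrite Cu C1 /=.
case: excluded_middle_informative => /= [E|ne].
  subst g. case: excluded_middle_informative => //= _.
  by rewrite comp_notin // g_opp0 nadd0x.
by case: excluded_middle_informative => //= E; exfalso; apply: ne.
Qed.

Lemma uniq_comp s t : homog s -> homog t -> lsum s = lsum t ->
  forall g, comp s g = comp t g.
Proof.
move=> Hs Ht E g.
case: (sub_all Ht Hs) => u [[NDu Hu] Lu Cu].
case: HG => _ _ Hind _.
have u0 : forall p, List.In p u -> p.2 = 0.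
  apply: Hind => //. by rewrite Lu E naddNx.
have : comp u g = 0.
  case: (comp_cases u g) => [//|[p [Hp ->]]]; by apply: u0.
rewrite Cu => H.
have E2 : comp s g = comp t g + (- comp t g + comp s g) by rewrite naddA naddxN nadd0x.
by rewrite E2 H naddx0.
Qed.

End Aux.

Theorem proposition3 (G : monoid) (N : nearRing) (Ng : G -> N -> Prop)
  (d : Order.disp_t) (A : orderType d) (P : A -> N -> Prop) :
  graded_near_ring Ng ->
  (forall a, graded_weakly_prime Ng (P a)) ->
  (forall a b : A, (a <= b)%O -> subsetN (P a) (P b)) ->
  graded_weakly_prime Ng (fun x => forall a : A, P a x).
Proof.
move=> HG HP Hmon.
have Id : forall a, ideal (P a) by move=> a; case: (HP a) => [[]].
split; first split.
- split; first split.
  + by move=> a; case: (Id a) => [[]].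
  + by move=> x y Hx Hy a; case: (Id a) => [[_ H _ _] _ _]; apply: H.
  + by move=> x Hx a; case: (Id a) => [[_ _ H _] _ _]; apply: H.
  + by move=> n x Hx a; case: (Id a) => [[_ _ _ H] _ _]; apply: H.
  + by move=> i n Hi a; case: (Id a) => [_ H _]; apply: H.
  + by move=> n n' i Hi a; case: (Id a) => [_ _ H]; apply: H.
- move=> x Hx.
  have HG' := HG. case: HG' => _ Hdec _ _.
  case: (Hdec x) => s [NDs Hs Es].
  exists s; split => // p Hp; split; first by apply: Hs.
  move=> a. case: (HP a) => [[_ Hgr] _].
  case: (Hgr x (Hx a)) => sa [NDa Ha Ea].
  have Hsa : homog Ng sa by split => // q Hq; case: (Ha q Hq).
  have := uniq_comp HG (conj NDs Hs) Hsa. rewrite -Es -Ea => /(_ erefl p.1).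
  rewrite comp_in // => ->.
  case: (comp_cases sa p.1) => [->|[q [Hq ->]]].
    by case: (Id a) => [[]].
  by case: (Ha q Hq).
- move=> I J HI HJ Hnt Hsub.
  apply: NNPP => Hno.
  have [HnI HnJ] : ~ subsetN I (fun x => forall a, P a x) /\
                   ~ subsetN J (fun x => forall a, P a x) by tauto.
  have exI : exists a x, I x /\ ~ P a x.
    apply: NNPP => H; apply: HnI => x Ix a; apply: NNPP => Hn; apply: H; by exists a, x.
  have exJ : exists a x, J x /\ ~ P a x.
    apply: NNPP => H; apply: HnJ => x Jx a; apply: NNPP => Hn; apply: H; by exists a, x.
  case: exI => a [x [Ix Nx]]. case: exJ => b [y [Jy Ny]].
  have Hsa : forall c, subsetN (prodI I J) (P c) by move=> c z Hz; apply: Hsub.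
  case: (Order.TotalTheory.le_total a b) => /orP [ab|ba].
  + case: (HP a) => _ H. case: (H I J HI HJ Hnt (Hsa a)) => Hs.
      by apply: Nx; apply: Hs.
    by apply: Ny; apply: (Hmon _ _ ab); apply: Hs.
  + case: (HP b) => _ H. case: (H I J HI HJ Hnt (Hsa b)) => Hs.
      by apply: Nx; apply: (Hmon _ _ ba); apply: Hs.
    by apply: Ny; apply: Hs.
Qed.
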